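(* For all integers $0\le k\le n$, $A_{k,n}(q)=\sum_{i=0}^{n}\binom{n}{i}E_{k,n-i}(q)$.
   Context: Place $1,\dots,n$ clockwise on a circle. Distinct $p_1,\dots,p_m\in\{1,\dots,n\}$ are in clockwise cyclic order if $(p_2-p_1)\bmod n<(p_3-p_1)\bmod n<\dots<(p_m-p_1)\bmod n$ (residues in $\{0,\dots,n-1\}$). A decorated permutation of $[n]$ is a permutation $\pi\in S_n$ together with a coloring of each fixed point as ''clockwise'' or ''counterclockwise''. An ordered pair $(i,j)$, $i\ne j$, is aligned if the entries of $(i,\pi(i),\pi(j),j)$ are pairwise distinct except that possibly $i=\pi(i)$ and/or $j=\pi(j)$, the distinct entries in this order are in clockwise cyclic order, $i$ is colored counterclockwise if $\pi(i)=i$, and $j$ is colored clockwise if $\pi(j)=j$. An alignment is an unordered pair $\{i,j\}$ such that $(i,j)$ or $(j,i)$ is aligned; $\mathrm{al}(\pi)$ is the number of alignments. $K(\pi)=\#\{i:\pi(i)>i\}+\#\{\text{fixed points colored counterclockwise}\}$. Define $A_{k,n}(q)=\sum q^{k(n-k)-\mathrm{al}(\pi)}$ over decorated permutations $\pi$ of $[n]$ with $K(\pi)=k$ (by Postnikov's theorem this is the generating function of the cells of the totally nonnegative Grassmannian $Gr^+_{k,n}$ by dimension). An ordinary permutation $\pi\in S_m$ is regarded as the decorated permutation with all fixed points colored counterclockwise; $i$ is a weak excedence of $\pi$ if $\pi(i)\ge i$. For $m\ge0$, $E_{k,m}(q)=\sum q^{k(m-k)-\mathrm{al}(\pi)}$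 over $\pi\in S_m$ with exactly $k$ weak excedences (an empty sum, hence $0$, if there are none). *)

(* Defs.v *)
From HB Require Import structures.
From mathcomp Require Import all_boot all_order all_algebra all_fingroup.
Set Implicit Arguments. Unset Strict Implicit. Unset Printing Implicit Defensive.
Import Order.TTheory GRing.Theory Num.Theory.

(* The points 1..n of the circle are represented by 'I_n (value i stands for
   point i+1); cyclic order only depends on differences mod n, so this shift
   is harmless. *)

(* A duplicate-free list s = [:: p1; ...; pm] of residues < n is in clockwise
   cyclic order iff (p2-p1) mod n < ... < (pm-p1) mod n. *)
Definition cyc_ordered (n : nat) (s : seq nat) : bool :=
  match s with
  | [::] => true
  | p :: _ => sorted ltn [seq (x + n - p) %% n | x <- s]
  end.

(* A decorated permutation is a pair (pi, C) where C is the set of fixed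
   points of pi colored counterclockwise (C must be a subset of the fixed
   points); the other fixed points are colored clockwise. *)
Definition fixpts (n : nat) (pi : {perm 'I_n}) : {set 'I_n} :=
  [set i | pi i == i].

Definition aligned (n : nat) (pi : {perm 'I_n}) (C : {set 'I_n}) (i j : 'I_n)
  : bool :=
  [&& i != j, i != pi j, pi i != j, pi i != pi j,
      cyc_ordered n (undup [:: val i; val (pi i); val (pi j); val j]),
      (pi i == i) ==> (i \in C) &
      (pi j == j) ==> (j \notin C)].

Definition al (n : nat) (pi : {perm 'I_n}) (C : {set 'I_n}) : nat :=
  #|[set p : 'I_n * 'I_n | (val p.1 < val p.2)%N &&
        (aligned pi C p.1 p.2 || aligned pi C p.2 p.1)]|.

Definition Kstat (n : nat) (pi : {perm 'I_n}) (C : {set 'I_n}) : nat :=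
  (#|[set i : 'I_n | val i < val (pi i)]| + #|C|)%N.

Local Open Scope ring_scope.

(* A_{k,n}(q), evaluated at a unit q of a commutative ring (integer exponents). *)
Definition Apoly (R : comUnitRingType) (k n : nat) (q : R) : R :=
  \sum_(pi : {perm 'I_n})
    \sum_(C : {set 'I_n} | (C \subset fixpts pi) && (Kstat pi C == k))
       q ^ ((k * (n - k))%N%:Z - (al pi C)%:Z).

Definition wexc (m : nat) (pi : {perm 'I_m}) : nat :=
  #|[set i : 'I_m | (val i <= val (pi i))%N]|.

(* E_{k,m}(q): ordinary permutations = all fixed points counterclockwise *)
Definition Epoly (R : comUnitRingType) (k m : nat) (q : R) : R :=
  \sum_(pi : {perm 'I_m} | wexc pi == k)
     q ^ ((k * (m - k))%N%:Z - (al pi (fixpts pi))%:Z).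

(* Main.v *)
Require Import Defs.
From HB Require Import structures.
From mathcomp Require Import all_boot all_order all_algebra all_fingroup.
From mathcomp Require Import zify.
Import Order.TTheory GRing.Theory Num.Theory.

Lemma dmod (x p N : nat) : x < N -> p < N ->
  (x + N - p) %% N = if p <= x then x - p else x + N - p.
Proof.
move=> xN pN; case: leqP => px.
  rewrite -addnBAC // modnDr modn_small //; lia.
rewrite modn_small //; lia.
Qed.

Lemma bumpE j x : bump j x = if j <= x then x.+1 else x.
Proof. by rewrite /bump; case: leqP. Qed.

Lemma cyc_bump m (j : nat) (s : seq nat) : j <= m -> all (fun x => x < m) s ->
  cyc_ordered m.+1 (map (bump j) s) = cyc_ordered m s.
Proof.
move=> jm; case: s => [//|p t] Hall.
have pm : p < m by move: Hall => /andP[].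
have E : forall n p t, cyc_ordered n (p::t) = sorted ltn [seq (x+n-p)%%n | x <- p::t] by [].
rewrite map_cons !E -map_cons -map_comp !sorted_map.
apply: (@eq_in_sorted _ (fun x => x < m)); last by [].
move=> x y xm ym /=; have {}xm : x < m := xm; have {}ym : y < m := ym.
have bx : bump j x < m.+1 by rewrite bumpE; case: ifP => _; lia.
have bY : bump j y < m.+1 by rewrite bumpE; case: ifP => _; lia.
have bp : bump j p < m.+1 by rewrite bumpE; case: ifP => _; lia.
rewrite !dmod // !bumpE.

case: (boolP (j <= x)) => jx; rewrite ?jx ?(negbTE jx);
case: (boolP (j <= y)) => jy; rewrite ?jy ?(negbTE jy);
case: (boolP (j <= p)) => jp; rewrite ?jp ?(negbTE jp);
repeat case: ifP => ?; apply/idP/idP => H; lia.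
Qed.


Section Lift.
Variables (m : nat) (j : 'I_m.+1) (s : {perm 'I_m}) (C : {set 'I_m}).
Hypothesis CF : C \subset fixpts s.
Local Notation p := (lift_perm j j s).
Local Notation C' := (lift j @: C).

Lemma fix_lift : fixpts p = j |: (lift j @: fixpts s).
Proof.
apply/setP => x; rewrite !inE; case: (unliftP j x) => [y ->|->].
  rewrite lift_perm_lift (inj_eq lift_inj) [lift j y == j]eq_sym (negbTE (neq_lift _ _)) /=.
  by rewrite (mem_imset _ _ (lift_inj (h:=j))) inE.
by rewrite lift_perm_id !eqxx.
Qed.

Lemma aligned_lift a b : aligned p C' (lift j a) (lift j b) = aligned s C a b.
Proof.
rewrite /aligned !lift_perm_lift !(inj_eq lift_inj) !(mem_imset _ _ (lift_inj (h:=j))).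
have -> : [:: val (lift j a); val (lift j (s a)); val (lift j (s b)); val (lift j b)]
   = map (bump j) [:: val a; val (s a); val (s b); val b] by [].
rewrite undup_map_inj; last exact: (can_inj (bumpK j)).
by rewrite cyc_bump ?all_undup //= ?ltn_ord // -ltnS ltn_ord.
Qed.

Lemma jnotC' : (j \in C') = false.
Proof. by apply/negbTE/imsetP => -[x _ /eqP]; rewrite (negbTE (neq_lift _ _)). Qed.

Lemma aligned_jl x : aligned p C' j (lift j x) = false.
Proof. by rewrite /aligned lift_perm_id eqxx jnotC' /= !andbF. Qed.

Lemma aligned_jr x :
  (aligned p C' (lift j x) j : nat) + ((x < j) && (j <= s x))
  = ((x < s x) : nat) + (x \in C) + ((s x < j) && (j <= x)).
Proof.
rewrite /aligned lift_perm_id lift_perm_lift !(inj_eq lift_inj) (mem_imset _ _ (lift_inj (h:=j))).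
have nl : forall y, (lift j y != j) by move=> y; rewrite eq_sym neq_lift.
rewrite jnotC' eqxx /= !nl /=.
have jm : (j : nat) <= m by rewrite -ltnS ltn_ord.
have xm := ltn_ord x; have sxm := ltn_ord (s x).
have cb : forall y : 'I_m, (bump j y == j) = false.
  by move=> y; apply/negbTE; rewrite eq_sym neq_bump.
have bxm : forall y : 'I_m, bump j y < m.+1.
  by move=> y; rewrite bumpE; case: ifP => _; have := ltn_ord y; lia.
case: (eqVneq (s x) x) => [sxx|sxx].
  rewrite sxx /= !inE !eqxx !cb /= /cyc_ordered /= andbT.
  rewrite !dmod ?bxm ?ltn_ord // ?leqnn ?subnn !bumpE.
  case: (boolP (j <= x)) => jx; rewrite ?jx ?(negbTE jx);
  case: (x \in C) => /=; move: jx xm; rewrite /=; set X := nat_of_ord x;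
  move=> jx xm; repeat case: ifP => ?; lia.
have Cx : (x \in C) = false.
  by apply: contraNF sxx => /(subsetP CF); rewrite inE.
have ne : (val (s x) != val x) by [].
have ne2 : (bump j x == bump j (s x)) = false.
  by rewrite (inj_eq (can_inj (bumpK j))) eq_sym; apply/negbTE.
rewrite Cx /= !inE ne2 !cb eqxx /= /cyc_ordered /= andbT.
rewrite !dmod ?bxm ?ltn_ord // ?leqnn ?subnn.
move: ne; rewrite !bumpE.
case: (boolP (j <= x)) => jx; rewrite ?jx ?(negbTE jx);
case: (boolP (j <= s x)) => jy; rewrite ?jy ?(negbTE jy);
move: jx jy xm sxm; rewrite /=; set X := nat_of_ord x; set Y := nat_of_ord (s x);
move=> jx jy xm sxm; repeat case: ifP => ?; lia.
Qed.

End Lift.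


Lemma card_sum (T : finType) (P : pred T) : #|[set i | P i]| = \sum_i (P i : nat).
Proof.
rewrite -sum1_card big_mkcond /=; apply: eq_bigr => i _; rewrite inE; by case: (P i).
Qed.

Lemma ltn_bump2 h x y : (bump h x < bump h y) = (x < y).
Proof. rewrite !bumpE; case: ifP => ?; case: ifP => ?; apply/idP/idP; lia. Qed.

Lemma flow m (s : {perm 'I_m}) (j : nat) :
  \sum_(x : 'I_m) (((x < j) && (j <= s x)) : nat) = \sum_(x : 'I_m) (((s x < j) && (j <= x)) : nat).
Proof.
have E1 : \sum_(x : 'I_m) ((x < j) : nat) = \sum_(x : 'I_m) (((x < j) && (j <= s x)) : nat)
   + \sum_(x : 'I_m) (((x < j) && (s x < j)) : nat).
  rewrite -big_split; apply: eq_bigr => x _ /=; rewrite [j <= s x]leqNgt.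
  by case: (x < j); case: (s x < j).
have E2 : \sum_(x : 'I_m) ((x < j) : nat) = \sum_(x : 'I_m) (((s x < j) && (j <= x)) : nat)
   + \sum_(x : 'I_m) (((x < j) && (s x < j)) : nat).
  rewrite (reindex_inj (@perm_inj _ s)) -big_split; apply: eq_bigr => y _ /=; rewrite [j <= y]leqNgt.
  by case: (y < j); case: (s y < j).
by apply/eqP; rewrite -(eqn_add2r (\sum_(x : 'I_m) (((x < j) && (s x < j)) : nat))) -E1 -E2.
Qed.

Definition gal n (pi : {perm 'I_n}) (C : {set 'I_n}) (a b : 'I_n) : nat :=
  ((val a < val b) && (aligned pi C a b || aligned pi C b a)).
Arguments gal {n}.

Lemma al_sum n (pi : {perm 'I_n}) C : al pi C = \sum_a \sum_b gal pi C a b.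
Proof. by rewrite /al card_sum pair_bigA. Qed.

Lemma Kstat_sum n (pi : {perm 'I_n}) C :
  Kstat pi C = \sum_(x : 'I_n) ((x < pi x) : nat) + \sum_(x : 'I_n) ((x \in C) : nat).
Proof.
rewrite /Kstat card_sum; congr (_ + _).
by rewrite -sum1_card big_mkcond.
Qed.

Section Lift2.
Variables (m : nat) (j : 'I_m.+1) (s : {perm 'I_m}) (C : {set 'I_m}).
Hypothesis CF : C \subset fixpts s.
Local Notation p := (lift_perm j j s).
Local Notation C' := (lift j @: C).

Lemma Kstat_lift : Kstat p C' = Kstat s C.
Proof.
rewrite /Kstat card_imset; last exact: lift_inj.
rewrite !card_sum (bigD1_ord j) //= lift_perm_id ltnn add0n.
congr (_ + _); apply: eq_bigr => x _; by rewrite lift_perm_lift /= ltn_bump2.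
Qed.

Lemma al_lift : al p C' = al s C + Kstat s C.
Proof.
rewrite !al_sum (bigD1_ord j) //= [X in X + _](bigD1_ord j) //=.
rewrite {1}/gal ltnn /= add0n.
rewrite [X in _ + X = _](eq_bigr (fun x : 'I_m => gal p C' (lift j x) j
   + \sum_(y : 'I_m) gal p C' (lift j x) (lift j y))); last first.
  by move=> x _; rewrite (bigD1_ord j).
rewrite big_split /= addnA [in LHS]addnC; congr (_ + _).
  apply: eq_bigr => x _; apply: eq_bigr => y _.
  by rewrite /gal !aligned_lift //= ltn_bump2.
rewrite -big_split /=.
apply/eqP; rewrite -(eqn_add2r (\sum_(x : 'I_m) (((x < j) && (j <= s x)) : nat))).
have -> : \sum_i (gal p C' j (lift j i) + gal p C' (lift j i) j)
  = \sum_i (aligned p C' (lift j i) j : nat).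
  apply: eq_bigr => x _; rewrite /gal !aligned_jl /= orbF.
  have : (val j != val (lift j x)) by exact: neq_lift.
  case: (aligned _ _ _ _); rewrite ?andbF //= ?andbT.
  move=> ne; lia.
rewrite -big_split /= Kstat_sum flow -!big_split /=; apply/eqP.
by apply: eq_bigr => x _; rewrite aligned_jr.
Qed.

End Lift2.


Lemma lift_surj m (j : 'I_m.+1) (pi : {perm 'I_m.+1}) :
  pi j = j -> exists s, pi = lift_perm j j s.
Proof.
move=> Pj.
pose f (x : 'I_m) : 'I_m := odflt x (unlift j (pi (lift j x))).
have Hf : forall x, lift j (f x) = pi (lift j x).
  move=> x; rewrite /f; case: unliftP => [u ->|E] //=.
  have : lift j x = j by apply: (@perm_inj _ pi); rewrite Pj.
  by move/eqP; rewrite eq_sym (negbTE (neq_lift _ _)).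
have finj : injective f.
  by move=> x y /(congr1 (lift j)); rewrite !Hf => /perm_inj/lift_inj.
exists (perm finj); apply/permP => x; case: (unliftP j x) => [y ->|->].
  by rewrite lift_perm_lift permE Hf.
by rewrite lift_perm_id.
Qed.

Lemma wexcE n (pi : {perm 'I_n}) : Kstat pi (fixpts pi) = wexc pi.
Proof.
rewrite Kstat_sum /wexc (card_sum _ (fun i : 'I_n => val i <= val (pi i))) -big_split; apply: eq_bigr => i _ /=.
rewrite inE.
have -> : (pi i == i) = (val (pi i) == val i) by [].
by case: (ltngtP i (pi i)).
Qed.

Lemma Kstat_le n (pi : {perm 'I_n}) (C : {set 'I_n}) : C \subset fixpts pi -> Kstat pi C <= n.
Proof.
move=> CF; rewrite Kstat_sum -big_split /=.
apply: (@leq_trans (\sum_(i : 'I_n) 1)); last by rewrite sum1_card card_ord.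
apply: leq_sum => i _.
case: (boolP (i \in C)) => iC; last by rewrite addn0; case: (_ < _).
have := subsetP CF i iC; rewrite inE => /eqP ->; by rewrite ltnn.
Qed.


Section Main.
Variables (R : comUnitRingType) (q : R) (k : nat).
Local Open Scope ring_scope.

Definition Tsum n (D : {set 'I_n}) : R :=
  \sum_(pi : {perm 'I_n} | (D \subset fixpts pi) && (Kstat pi (fixpts pi :\: D) == k))
     q ^ ((k * (n - k))%N%:Z - (al pi (fixpts pi :\: D))%:Z).
Arguments Tsum {n}.

Lemma Tsum0 n : Tsum (set0 : {set 'I_n}) = Epoly k n q.
Proof.
apply: eq_big => [pi|pi _]; by rewrite setD0 ?sub0set ?wexcE.
Qed.

Lemma jnot_im m (j : 'I_m.+1) (A : {set 'I_m}) : (j \in lift j @: A) = false.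
Proof. by apply/negbTE/imsetP => -[x _ /eqP]; rewrite (negbTE (neq_lift _ _)). Qed.

Lemma mem_lift_im m (j : 'I_m.+1) (A : {set 'I_m}) (y : 'I_m) :
  (lift j y \in lift j @: A) = (y \in A).
Proof. exact: (mem_imset _ _ (lift_inj (h:=j))). Qed.

Lemma Tstep m (j : 'I_m.+1) (D : {set 'I_m.+1}) : j \in D ->
  Tsum D = Tsum [set x | lift j x \in D].
Proof.
move=> jD; set D' := [set x | lift j x \in D].
have lj : forall y, (lift j y == j) = false by move=> y; apply/negbTE; rewrite eq_sym neq_lift.
have subE : forall s, (D \subset fixpts (lift_perm j j s)) = (D' \subset fixpts s).
  move=> s; rewrite fix_lift; apply/subsetP/subsetP => H x.
    rewrite inE => /H; rewrite !inE lj /= mem_lift_im inE //.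
  case: (unliftP j x) => [y ->|->]; last by rewrite !inE eqxx.
  move=> yD; rewrite !inE lj /= mem_lift_im.
  by apply: H; rewrite inE.
have fixE : forall s, fixpts (lift_perm j j s) :\: D = lift j @: (fixpts s :\: D').
  move=> s; rewrite fix_lift; apply/setP => x.
  case: (unliftP j x) => [y ->|->]; last by rewrite in_setD jD /= jnot_im.
  rewrite !inE lj /= !mem_lift_im !inE.
  by [].
rewrite /Tsum.
have imE : [set pi : {perm 'I_m.+1} | pi j == j] = lift_perm j j @: setT.
  apply/setP => pi; rewrite inE; apply/idP/imsetP.
    by move/eqP/lift_surj => [t ->]; exists t.
  by move=> [t _ ->]; rewrite lift_perm_id.
rewrite (eq_bigl (fun pi => (pi \in [set pi : {perm 'I_m.+1} | pi j == j]) &&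
   ((D \subset fixpts pi) && (Kstat pi (fixpts pi :\: D) == k)))); last first.
  move=> pi; rewrite inE; case: (boolP (D \subset _)) => HD; last by rewrite !andbF.
  by move/subsetP: HD => /(_ j jD); rewrite inE => ->.
rewrite big_mkcondr imE big_imset /=; last first.
  move=> s t _ _ E; apply/permP => x; apply: (lift_inj (h:=j)).
  by rewrite -(lift_perm_lift j j s) -(lift_perm_lift j j t) E.
rewrite [RHS]big_mkcond; apply: eq_big => [s|s _]; first by rewrite inE.
have CF : fixpts s :\: D' \subset fixpts s by apply: subsetDl.
rewrite subE fixE Kstat_lift // al_lift //.
case: ifP => // /andP[_ /eqP K]; congr (q ^ _).
have km : (k <= m)%N by rewrite -K; apply: Kstat_le.
rewrite K subSn // mulnS; lia.
Qed.

Lemma Tcard d : forall n (D : {set 'I_n}), #|D| = d -> Tsum D = Epoly k (n - d) q.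
Proof.
elim: d => [|d IH] n D cD.
  by rewrite (cards0_eq cD) Tsum0 subn0.
case: n D cD => [|m] D cD.
  by have := max_card D; rewrite card_ord cD.
have : (0 < #|D|)%N by rewrite cD.
case/card_gt0P => j jD.
rewrite (@Tstep m j D jD) (IH m) //.
have E : D :\ j = lift j @: [set x | lift j x \in D].
  apply/setP => x; case: (unliftP j x) => [y ->|->].
    by rewrite mem_lift_im !inE eq_sym neq_lift.
  by rewrite jnot_im !inE eqxx.
move: cD; rewrite (cardsD1 j D) jD E card_imset; last exact: lift_inj.
by move=> [].
Qed.

Lemma symdiff_inv (T : finType) (F : {set T}) :
  involutive (fun D : {set T} => (F :\: D) :|: (D :\: F)).
Proof.
move=> D; apply/setP => x; rewrite !inE.
by case: (x \in F); case: (x \in D).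
Qed.

Lemma symdiff_sub (T : finType) (F D : {set T}) :
  ((F :\: D) :|: (D :\: F) \subset F) = (D \subset F).
Proof.
apply/subsetP/subsetP => H x.
  move=> xD; have := H x; rewrite !inE xD /=.
  by case: (x \in F) => //; apply.
rewrite !inE; case/orP => /andP[] //.
by move=> xnF /H; rewrite (negbTE xnF).
Qed.

Lemma symdiff_eq (T : finType) (F D : {set T}) :
  D \subset F -> (F :\: D) :|: (D :\: F) = F :\: D.
Proof.
move=> DF; apply/setP => x; rewrite !inE.
case: (boolP (x \in D)) => xD /=.
  by rewrite (subsetP DF x xD).
by rewrite andbF orbF.
Qed.

Lemma A_T n : Apoly k n q = \sum_(D : {set 'I_n}) Tsum D.
Proof.
rewrite /Apoly /Tsum.
rewrite (eq_bigr (fun pi : {perm 'I_n} => \sum_(D : {set 'I_n} | (D \subset fixpts pi)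
     && (Kstat pi (fixpts pi :\: D) == k))
     q ^ ((k * (n - k))%N%:Z - (al pi (fixpts pi :\: D))%:Z))); last first.
  move=> pi _; set F := fixpts pi.
  rewrite (reindex_inj (inv_inj (symdiff_inv _ F))).
  apply: eq_big => D; rewrite symdiff_sub.
    by case: (boolP (D \subset F)) => // DF; rewrite symdiff_eq.
  by move/andP => [DF _]; rewrite symdiff_eq.
under eq_bigr do rewrite big_mkcond.
rewrite exchange_big; apply: eq_bigr => D _.
by rewrite -big_mkcond.
Qed.
End Main.

Local Open Scope ring_scope.

Theorem mainTheorem8 (R : comUnitRingType) (q : R) (k n : nat) :
  q \is a GRing.unit -> (k <= n)%N ->
  Apoly k n q = \sum_(i < n.+1) ('C(n, i))%:R * Epoly k (n - i) q.
Proof.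
move=> _ _; rewrite A_T.
rewrite (eq_bigr (fun D : {set 'I_n} => Epoly k (n - #|D|) q)); last first.
  by move=> D _; apply: Tcard.
rewrite (partition_big (fun D : {set 'I_n} => (inord #|D| : 'I_n.+1)) xpredT) //=.
apply: eq_bigr => i _.
rewrite (eq_big (fun D : {set 'I_n} => D \in [set D : {set 'I_n} | #|D| == i])
   (fun _ => Epoly k (n - i) q)).
- by rewrite sumr_const card_draws card_ord mulr_natl.
- move=> D; rewrite inE.
  have Dn : (#|D| < n.+1)%N by rewrite ltnS -[X in (_ <= X)%N](card_ord n) max_card.
  by rewrite -(inj_eq val_inj) /= inordK.
- move=> D /eqP <-.
  have Dn : (#|D| < n.+1)%N by rewrite ltnS -[X in (_ <= X)%N](card_ord n) max_card.
  by rewrite inordK.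
Qed.
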